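(* For every graph $G$, $\psi(G)\le\gamma_M(G)+\gamma(G)$.
   Context: All graphs are finite, simple, undirected and connected, with at least 2 vertices; $d(u,v)$ is the shortest-path distance. A set $S\subseteq V(G)$ is resolving if for all distinct $x,y$ there is $u\in S$ with $d(u,x)\ne d(u,y)$. $S$ is dominating if every vertex not in $S$ has a neighbor in $S$; $\gamma(G)$ is its minimum size. An MLD-set is a set both resolving and dominating; $\gamma_M(G)$ is its minimum size. A doubly resolving set is a set $S$ such that for every pair of distinct vertices $x,y$ there are $u,v\in S$ with $d(u,x)-d(u,y)\ne d(v,x)-d(v,y)$; $\psi(G)$ is its minimum size. *)

(* Defs.v *)
From mathcomp Require Import all_boot all_order all_algebra.
Set Implicit Arguments. Unset Strict Implicit. Unset Printing Implicit Defensive.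

Definition simple_graph (T : finType) (e : rel T) : Prop :=
  irreflexive e /\ symmetric e.

Definition connected_graph (T : finType) (e : rel T) : Prop :=
  forall x y : T, connect e x y.

Fixpoint ball (T : finType) (e : rel T) (k : nat) (x : T) : {set T} :=
  match k with
  | 0 => [set x]
  | k'.+1 => ball e k' x :|: [set z | [exists w in ball e k' x, e w z]]
  end.

(* shortest-path distance: least k with y in ball k x (k < #|T| suffices
   in a connected graph; otherwise returns #|T|). *)
Definition dist (T : finType) (e : rel T) (x y : T) : nat :=
  find (fun k => y \in ball e k x) (iota 0 #|T|).

Definition resolving (T : finType) (e : rel T) (S : {set T}) : bool :=
  [forall x : T, forall y : T, (x != y) ==>
     [exists u in S, dist e u x != dist e u y]].

Definition dominating (T : finType) (e : rel T) (S : {set T}) : bool :=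
  [forall x : T, (x \notin S) ==> [exists u in S, e x u]].

Definition mld_set (T : finType) (e : rel T) (S : {set T}) : bool :=
  resolving e S && dominating e S.

Definition doubly_resolving (T : finType) (e : rel T) (S : {set T}) : bool :=
  [forall x : T, forall y : T, (x != y) ==>
     [exists u in S, exists v in S,
        ((dist e u x)%:Z - (dist e u y)%:Z != (dist e v x)%:Z - (dist e v y)%:Z)%R]].

(* minimum cardinality of a set satisfying P (default #|T|, attained by setT
   for all properties below when the graph has >= 2 vertices). *)
Definition min_card (T : finType) (P : {set T} -> bool) : nat :=
  \big[minn/#|T|]_(S : {set T} | P S) #|S|.

Definition domination_number (T : finType) (e : rel T) : nat :=
  min_card (dominating e).
Definition mld_number (T : finType) (e : rel T) : nat :=
  min_card (mld_set e).
Definition doubly_resolving_number (T : finType) (e : rel T) : nat :=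
  min_card (doubly_resolving e).

(* Main.v *)
Require Import Defs.
From mathcomp Require Import all_boot all_order all_algebra.
From mathcomp Require Import zify.
Set Implicit Arguments. Unset Strict Implicit.

Section Aux.
Variables (T : finType) (e : rel T).

Lemma dist_refl x : dist e x x = 0.
Proof.
rewrite /dist; case: #|T| => [|n] //=.
by rewrite set11.
Qed.

Lemma dist0 u x : dist e u x = 0 -> u = x.
Proof.
rewrite /dist; have : 0 < #|T| by apply/card_gt0P; exists x.
case: #|T| => [|n] //= _.
by case: ifP => // /[swap] _; rewrite inE => /eqP.
Qed.

Lemma dist1 u x : u != x -> e u x -> dist e u x = 1.
Proof.
move=> nux eux; rewrite /dist.
have : 1 < #|T|.
  rewrite (cardD1 u) (cardD1 x) !inE eq_sym nux //.
case: #|T| => [|[|n]] //= _.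
rewrite !inE eq_sym (negbTE nux) /=.
suff -> : [exists w in [set u], e w x] by [].
by apply/existsP; exists u; rewrite set11.
Qed.

Lemma min_card_le (P : {set T} -> bool) S : P S -> min_card P <= #|S|.
Proof.
move=> PS; rewrite /min_card.
have : S \in index_enum {set T} by rewrite mem_index_enum.
elim: (index_enum _) => //= i r IH; rewrite inE big_cons.
case/orP => [/eqP<-|/IH h]; first by rewrite PS geq_minl.
by case: ifP => _ //; apply: leq_trans (geq_minr _ _) h.
Qed.

Lemma min_card_attained (P : {set T} -> bool) :
  P setT -> exists S, P S /\ min_card P = #|S|.
Proof.
move=> PT; rewrite /min_card.
apply: (big_ind (fun n => exists S, P S /\ n = #|S|)).
- by exists setT; rewrite cardsT.
- move=> a b [A [PA ->]] [B [PB ->]].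
  by case: (leqP #|A| #|B|) => h; [exists A; split=> //; apply/minn_idPl | exists B; split=> //; apply/minn_idPr; apply: ltnW].
- by move=> S PS; exists S.
Qed.

End Aux.

Theorem theorem12 (T : finType) (e : rel T) :
  simple_graph e -> connected_graph e -> 2 <= #|T| ->
  doubly_resolving_number e <= mld_number e + domination_number e.
Proof.
move=> [irr sym] _ card2.
rewrite /doubly_resolving_number /mld_number /domination_number.
have domT : dominating e setT by apply/forallP => x; rewrite inE.
have resT : resolving e setT.
  apply/forallP => x; apply/forallP => y; apply/implyP => nxy.
  apply/existsP; exists x; rewrite inE dist_refl /=.
  by apply/negP => /eqP/esym/dist0 h; rewrite h eqxx in nxy.
have [S [/andP [resS domS] ->]] := @min_card_attained T (mld_set e) (introT andP (conj resT domT)).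
have [D [domD ->]] := @min_card_attained T (dominating e) domT.
pose good x y := [forall u in S, dist e u x == (dist e u y).+1].
pose X := [set x | [exists y in S :&: D, e x y && good x y]].
pose W := S :|: X :|: (D :\: S).
have cardX : #|X| <= #|S :&: D|.
  pose f x := odflt x [pick y in S :&: D | e x y && good x y].
  have fP x : x \in X -> (f x \in S :&: D) && (e x (f x) && good x (f x)).
    rewrite inE /f; case: pickP => [y /andP [-> ->] //|none /existsP [y /andP [yi h]]].
    by move: (none y); rewrite yi h.
  rewrite -(@card_in_imset _ _ f X).
    apply: subset_leq_card; apply/subsetP => _ /imsetP [x xX ->].
    by case/andP: (fP x xX).
  move=> x x' xX x'X fe.
  have /andP [_ /andP [_ gx]] := fP x xX.
  have /andP [_ /andP [_ gx']] := fP x' x'X.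
  rewrite -fe in gx'.
  apply/eqP; apply/negPn/negP => nxx'.
  move/forallP/(_ x)/forallP/(_ x')/implyP: resS => /(_ nxx') /exists_inP [u uS].
  by rewrite (eqP (forall_inP gx u uS)) (eqP (forall_inP gx' u uS)) eqxx.
have cardW : #|W| <= #|S| + #|D|.
  have h1 := cardsUI (S :|: X) (D :\: S).
  have h2 := cardsUI S X.
  have h3 := cardsID S D.
  rewrite setIC in cardX; rewrite /W.
  lia.
apply: leq_trans _ cardW; apply: min_card_le.
have SW u : u \in S -> u \in W by rewrite !inE => ->.
have XW u : u \in X -> u \in W by rewrite /W !inE => ->; rewrite orbT.
have DW u : u \in D -> u \in W.
  by move=> uD; rewrite /W !in_setU in_setD uD andbT; case: (u \in S); rewrite /= ?orbT.
have key : forall x y u0, u0 \in S -> dist e u0 y < dist e u0 x ->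
   (forall u, u \in W -> dist e u x + dist e u0 y = dist e u0 x + dist e u y) -> False.
  move=> x y u0 u0S lt F.
  have xW : x \notin W.
    by apply/negP => xW; move: (F x xW); rewrite dist_refl; lia.
  have adj : forall w, w \in W -> e x w -> w = y.
    move=> w wW exw.
    have wx : w != x by apply: contraNneq xW => <-.
    have ewx : e w x by rewrite sym.
    have := F w wW; rewrite (dist1 wx ewx) => h.
    by apply: (dist0 (e:=e)); lia.
  have xS : x \notin S by apply: contra xW; apply: SW.
  move/forallP/(_ x)/implyP: (domS) => /(_ xS) /exists_inP [s sS exs].
  have sy := adj s (SW s sS) exs; subst s.
  have yx : y != x by apply: contraNneq xS => <-.
  have eyx : e y x by rewrite sym.
  have c1 := F y (SW y sS); rewrite dist_refl (dist1 yx eyx) in c1.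
  have gxy : good x y.
    by apply/forall_inP => u uS; have := F u (SW u uS); move=> h; apply/eqP; lia.
  case yD: (y \in D).
    apply: (negP xW); apply: XW; rewrite inE; apply/existsP; exists y.
    by rewrite inE sS yD exs gxy.
  have xD : x \notin D by apply: contra xW; apply: DW.
  move/forallP/(_ x)/implyP: (domD) => /(_ xD) /exists_inP [w wD exw].
  have wy := adj w (DW w wD) exw; subst w.
  by rewrite wD in yD.
apply/forallP => x; apply/forallP => y; apply/implyP => nxy.
apply: contraT => H; suff : False by [].
have Hall : forall u v, u \in W -> v \in W ->
    dist e u x + dist e v y = dist e v x + dist e u y.
  move=> u v uW vW; apply/eqP; apply/negPn/negP => ne; apply: (negP H).
  apply/exists_inP; exists u => //; apply/exists_inP; exists v => //.
  by apply: contra ne => /eqP h; apply/eqP; lia.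
move/forallP/(_ x)/forallP/(_ y)/implyP: resS => /(_ nxy) /exists_inP [u0 u0S ne].
case: (ltngtP (dist e u0 x) (dist e u0 y)) => lt.
- apply: (key y x u0 u0S lt) => u uW; have := Hall u u0 uW (SW u0 u0S); lia.
- apply: (key x y u0 u0S lt) => u uW; have := Hall u u0 uW (SW u0 u0S); lia.
- by rewrite lt eqxx in ne.
Qed.
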